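(* Let $(X,\overline p)$ be a perverse CS set with singular set $\Sigma$. For every point $x\in X$ there exists a path $\beta\colon[0,1]\to X$ with $\beta(0)=x$ and $\beta(]0,1])\subseteq X\setminus\Sigma$. Consequently, the map $\pi_0(X\setminus\Sigma)\to\pi_0^{\overline p}(X)$ is surjective; this map sends the component of a regular point $y$ to the component of the $0$-simplex $y$ in $\mathscr G_{\overline p}X$.
   Context: Filtered spaces. A filtered space of formal dimension $n$ is a nonempty space $X$ with closed subsets $\emptyset=X_{-1}\subseteq\cdots\subseteq X_{n-1}\subsetneq X_n=X$. Strata are the nonempty connected components of $X_i\setminus X_{i-1}$, with codimension $n-i$. The singular set is $\Sigma=X_{n-1}$; points of $X\setminus\Sigma$ are regular. CS sets. A CS set is a filtered space satisfying: - each $X_i\setminus X_{i-1}$ is an $i$-manifold; - each $x\in X_i\setminus X_{i-1}$ with $i\ne n$ has an open neighborhood $V$ and a stratified homeomorphism $\varphi\colon U\times\mathring cL\to V$ with $\varphi(u,\mathtt v)=u$ and $\varphi(U\times\mathring cL_j)=V\cap X_{i+j+1}$. Here $U$ is an open neighborhood of $x$ in $X_i\setminus X_{i-1}$, $L$ is a nonempty compact filtered space of formal dimension $n-i-1$, and $\mathring cL=L\times[0,1[/L\times0$ has apex $\mathtt v$ and filtration $\mathring cL_{i-1}$ in degree $i$. A stratified homeomorphism is a homeomorphism which, with its inverse, sends each stratum into a stratum of no larger codimension. Perversities. A perversity is a map $\overline p$ from strata to $\mathbb Z\cup\{\pm\infty\}$ vanishing on regular strata. Full simplices and the Gajer space.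 A simplex $\sigma\colon\Delta^j\to X$ is $\overline p$-allowable if $\dim\sigma^{-1}S\le j-\operatorname{codim}S+\overline p(S)$ for all singular strata $S$. Here $\dim$ is polyhedral dimension, with $\dim\emptyset=-\infty$. A simplex is $\overline p$-full if it and all its iterated faces are allowable. $\mathscr G_{\overline p}X\subseteq\mathrm{Sing}\,X$ is the simplicial set of full simplices, and $\pi_0^{\overline p}(X)=\pi_0(\mathscr G_{\overline p}X)$. Every regular point, as a $0$-simplex, is $\overline p$-full. *)

(* Defs.v *)
From HB Require Import structures.
From mathcomp Require Import all_boot all_order all_algebra.
From mathcomp Require Import all_classical all_reals all_analysis.
From mathcomp Require Import generic_quotient.
From Stdlib Require Import Relations.
Set Implicit Arguments. Unset Strict Implicit. Unset Printing Implicit Defensive.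
Import Order.TTheory GRing.Theory Num.Theory.
Import numFieldNormedType.Exports.
Local Open Scope classical_set_scope.
Local Open Scope ring_scope.

Definition homeo_on {A B : topologicalType} (D : set A) (E : set B)
  (f : A -> B) (g : B -> A) : Prop :=
  [/\ {within D, continuous f}, {within E, continuous g},
      (forall a, D a -> E (f a) /\ g (f a) = a) &
      (forall b, E b -> D (g b) /\ f (g b) = b)].

(* A filtration X_0 ⊆ ... ⊆ X_n is given by F : nat -> set T (only the levels
   0..n matter); Fz F extends it to integer indices with X_i = ∅ for i < 0. *)
Definition Fz {T : Type} (F : nat -> set T) (i : int) : set T :=
  match i with Posz k => F k | Negz _ => set0 end.

Definition filtered {T : topologicalType} (n : nat) (F : nat -> set T) : Prop :=
  [/\ (exists x : T, True),
      (forall i, (i <= n)%N -> closed (F i)),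
      (forall i j, (i <= j)%N -> (j <= n)%N -> F i `<=` F j),
      F n = setT &
      Fz F (n%:Z - 1) `<` F n].

Definition Fdiff {T : Type} (F : nat -> set T) (i : nat) : set T :=
  F i `\` Fz F (i%:Z - 1).

Definition stratum {T : topologicalType} (n : nat) (F : nat -> set T)
  (i : nat) (S : set T) : Prop :=
  (i <= n)%N /\ exists x, Fdiff F i x /\ S = connected_component (Fdiff F i) x.

Definition manifold (R : realType) {X : topologicalType} (i : nat) (M : set X)
  : Prop :=
  (forall x y, M x -> M y -> x <> y ->
     exists U V : set X, [/\ open U, open V, U x, V y & U `&` V = set0]) /\
  (forall x, M x -> exists (W : set X) (O : set 'rV[R]_i)
       (h : X -> 'rV[R]_i) (g : 'rV[R]_i -> X),
       [/\ open W, W x, open O & homeo_on (W `&` M) O h g]).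

Section Cone.
Variables (R : realType) (L : topologicalType).

Definition cone_dom : set (L * R)%type := [set p | 0 <= p.2 < 1].
Definition cone_base := set_type cone_dom.

Definition cone_rel : rel cone_base := fun a b =>
  (((val a).2 == 0) && ((val b).2 == 0)) || (a == b).

Lemma cone_rel_refl : ssrbool.reflexive cone_rel.
Proof. by move=> a; rewrite /cone_rel eqxx orbT. Qed.

Lemma cone_rel_sym : ssrbool.symmetric cone_rel.
Proof. by move=> a b; rewrite /cone_rel (andbC ((val b).2 == 0)) (eq_sym b). Qed.

Lemma cone_rel_trans : ssrbool.transitive cone_rel.
Proof.
move=> b a c; rewrite /cone_rel.
case/orP=> [/andP[ha hb]|/eqP->] //.
case/orP=> [/andP[_ hc]|/eqP<-]; first by rewrite ha hc.
by rewrite ha hb.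
Qed.

Canonical cone_equiv := @EquivRelPack cone_base cone_rel
  (EquivClass cone_rel_refl cone_rel_sym cone_rel_trans).

(* the open cone  L × [0,1[ / L × {0}  with the quotient topology *)
Local Open Scope quotient_scope.
Definition cone : topologicalType :=
  quotient_topology {eq_quot cone_equiv}.

Definition cone_proj (p : cone_base) : cone := \pi_cone p.

Definition cone_apex : set cone :=
  [set c | exists p : cone_base, cone_proj p = c /\ (val p).2 = 0].

(* the (open) cone on A ⊆ L, as a subset of the cone on L; cone on ∅ = apex *)
Definition coneon (A : set L) : set cone :=
  [set c | exists p : cone_base, cone_proj p = c /\
           ((val p).2 = 0 \/ A (val p).1)].
End Cone.

Definition is_CS_set (R : realType) {X : topologicalType} (n : nat)
  (F : nat -> set X) : Prop :=
  [/\ filtered n F,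
      (forall i, (i <= n)%N -> manifold R i (Fdiff F i)) &
      (forall i, (i < n)%N -> forall x, Fdiff F i x ->
        exists (U V : set X) (L : topologicalType) (LF : nat -> set L)
               (phi : (X * cone R L)%type -> X) (psi : X -> (X * cone R L)%type),
        [/\ [/\ (exists W, open W /\ U = W `&` Fdiff F i), U x & open V],
            compact [set: L] /\ filtered (n - i).-1 LF,
            homeo_on (U `*` setT) V phi psi,
            (forall u c, U u -> cone_apex c -> phi (u, c) = u) &
            (forall j : int, -1 <= j -> j <= (n%:Z - i%:Z - 1) ->
               phi @` (U `*` coneon (Fz LF j)) = V `&` Fz F (i%:Z + j + 1))])].

Definition perversity {X : topologicalType} (n : nat) (F : nat -> set X)
  (p : set X -> \bar int) : Prop :=
  forall S, stratum n F n S -> p S = 0%E.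

Section Simplices.
Variable R : realType.

Definition stdsimplex (j : nat) : set 'rV[R]_(j.+1) :=
  [set t | (forall k, 0 <= t 0 k) /\ \sum_k t 0 k = 1].

Definition conv (j : nat) (t : seq 'rV[R]_(j.+1)) : set 'rV[R]_(j.+1) :=
  [set y | exists lam : nat -> R, [/\ (forall k, 0 <= lam k),
     \sum_(k < size t) lam k = 1 & y = \sum_(k < size t) lam k *: t`_k]].

(* polyhedral dimension: dim A <= m iff A is contained in a compact polyhedron
   of dimension <= m, i.e. a finite union of (linear) simplices each spanned by
   at most m+1 points; dim ∅ = -oo *)
Definition poly_dim_le (j : nat) (A : set 'rV[R]_(j.+1)) (m : \bar int) : Prop :=
  exists s : seq (seq 'rV[R]_(j.+1)),
    (forall t, t \in s -> (((size t)%:Z - 1)%:E <= m)%E) /\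
    A `<=` [set y | exists2 t, t \in s & conv t y].

(* the linear map Δ^m -> Δ^j sending vertex l to vertex f l *)
Definition facemap (m j : nat) (f : 'I_(m.+1) -> 'I_(j.+1))
  (t : 'rV[R]_(m.+1)) : 'rV[R]_(j.+1) :=
  \row_k \sum_(l | f l == k) t 0 l.

Context {X : topologicalType} (n : nat) (F : nat -> set X)
  (p : set X -> \bar int).

Definition allowable (j : nat) (sigma : 'rV[R]_(j.+1) -> X) : Prop :=
  forall i S, (i < n)%N -> stratum n F i S ->
    poly_dim_le (@stdsimplex j `&` sigma @^-1` S)
                (((j%:Z - (n%:Z - i%:Z))%:E + p S)%E).

(* full simplex: a singular simplex all of whose iterated faces
   (including itself) are allowable *)
Definition full (j : nat) (sigma : 'rV[R]_(j.+1) -> X) : Prop :=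
  {within @stdsimplex j, continuous sigma} /\
  forall (m : nat) (f : 'I_(m.+1) -> 'I_(j.+1)),
    (forall a b : 'I_(m.+1), (a < b)%N -> (f a < f b)%N) ->
    allowable (sigma \o facemap f).

Definition pt_simplex (x : X) : 'rV[R]_1 -> X := fun _ => x.

(* 1-simplices of the Gajer space joining x to y *)
Definition gedge (x y : X) : Prop :=
  exists sigma : 'rV[R]_2 -> X,
    [/\ full sigma, sigma (delta_mx 0 0) = x & sigma (delta_mx 0 1) = y].

Definition gclass (x : X) : set X := [set y | clos_refl_sym_trans X gedge x y].

(* π_0^p(X): the components of G_p X, each represented by its set of vertices *)
Definition pi0_gajer : set (set X) :=
  [set C | exists x, full (pt_simplex x) /\ C = gclass x].

(* the map π_0(X \ Σ) -> π_0^p(X), on representatives: y ↦ component of y *)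
Definition pi0_map (y : X) : set X := gclass y.
End Simplices.

(* Main.v *)
Require Import Defs.
From HB Require Import structures.
From mathcomp Require Import all_boot all_order all_algebra.
From mathcomp Require Import all_classical all_reals all_analysis.
From mathcomp Require Import generic_quotient.
From Stdlib Require Import Relations.
From mathcomp Require Import zify.
Set Implicit Arguments. Unset Strict Implicit. Unset Printing Implicit Defensive.
Import Order.TTheory GRing.Theory Num.Theory.
Import numFieldNormedType.Exports.
Local Open Scope classical_set_scope.
Local Open Scope ring_scope.
Lemma comp_within {V U W : topologicalType} (B : set U) (f : U -> W) (g : V -> U) :
  (forall v, B (g v)) -> continuous g -> {within B, continuous f} -> continuous (f \o g).
Proof.
move=> gB cg /subspace_sigL_continuousP cf.
pose g' : V -> set_type B := fun v => exist _ (g v) (mem_set (gB v)).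
have cg' : continuous g'.
  by apply: (@continuous_comp_initial _ _ _ set_val g').
have -> : f \o g = sigL B f \o g' by [].
by move=> v; apply: continuous_comp; [exact: cg'|exact: cf].
Qed.

Definition clamp {R : realType} (t : R) : R := Num.min (Num.max t 0) (2^-1).

Lemma clamp_ge0 {R : realType} (t : R) : 0 <= clamp t.
Proof. by rewrite /clamp le_min le_max lexx orbT /= invr_ge0 ler0n. Qed.

Lemma clamp_lt1 {R : realType} (t : R) : clamp t < 1.
Proof. rewrite /clamp gt_min; apply/orP; right. by rewrite invf_lt1 // ltr1n. Qed.

Lemma clamp_gt0 {R : realType} (t : R) : 0 < t -> 0 < clamp t.
Proof. move=> t0; rewrite /clamp lt_min lt_max t0 /= invr_gt0 ltr0n //. Qed.

Lemma clamp0 {R : realType} : clamp (0 : R) = 0.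
Proof. by rewrite /clamp maxxx; apply/min_idPl; rewrite invr_ge0 ler0n. Qed.

Lemma clamp_cont {R : realType} : continuous (@clamp R).
Proof.
move=> t.
apply: (@continuous_min R R (fun t => Num.max t 0) (fun=> 2^-1)).
  apply: (@continuous_max R R id (fun=> 0)); [exact: cvg_id|exact: cvg_cst].
exact: cvg_cst.
Qed.
Section CP.
Variables (R : realType) (L : topologicalType).
Lemma clamp_dom (l : L) (t : R) : @cone_dom R L (l, clamp t).
Proof. by rewrite /cone_dom /= clamp_ge0 clamp_lt1. Qed.
Definition cmk (l : L) (t : R) : cone_base R L := exist _ (l, clamp t) (mem_set (clamp_dom l t)).
Definition cpath (l : L) (t : R) : cone R L := cone_proj (cmk l t).

Lemma cpath_cont l : continuous (cpath l).
Proof.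
have cm : continuous (cmk l).
  apply: (@continuous_comp_initial _ _ _ set_val (cmk l)) => t /=.
  rewrite (_ : set_val \o cmk l = (fun t => (l, clamp t))) //.
  exact: (cvg_pair (cvg_cst l) (@clamp_cont R t)).
move=> t; apply: continuous_comp; first exact: cm.
exact: pi_continuous.
Qed.

Lemma cpath_apex l : cone_apex (cpath l 0).
Proof. by exists (cmk l 0); split => //=; rewrite clamp0. Qed.

Lemma cpath_coneon l (A : set L) (t : R) : 0 < t -> coneon A (cpath l t) -> A l.
Proof.
move=> t0 [q [/eqmodP]]; rewrite /cone_rel /=.
have ct : clamp t != 0 by rewrite gt_eqF // clamp_gt0.
rewrite /cone_rel /= (negbTE ct) andbF /= => /eqP ->.
by case=> [/= /eqP|//]; rewrite (negbTE ct).
Qed.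
End CP.

Lemma Fz_succ {T : Type} (F : nat -> set T) (k : nat) : Fz F (k.+1%:Z - 1) = F k.
Proof. by rewrite (_ : (k.+1%:Z - 1 = k%:Z)%R) //; lia. Qed.

Lemma find_level {T : Type} (F : nat -> set T) (x : T) k :
  F k x -> exists2 i, (i <= k)%N & Fdiff F i x.
Proof.
elim: k => [|k IH] Fx.
  by exists 0%N => //; split.
case: (pselect (F k x)) => [/IH [i ik Fi]|nF]; first by exists i => //; exact: leqW.
by exists k.+1 => //; split => //; rewrite Fz_succ.
Qed.

Lemma part1 (R : realType) (X : topologicalType) (n : nat) (F : nat -> set X) :
  is_CS_set R n F -> forall x : X, exists beta : R -> X,
     [/\ continuous beta, beta 0 = x &
         forall t : R, 0 < t <= 1 -> ~ Fz F (n%:Z - 1) (beta t)].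
Proof.
case=> [[_ _ _ FnT _] _ Hloc] x.
have [i] := find_level (k:=n) (x:=x) (F:=F) (ltac:(by rewrite FnT)).
rewrite leq_eqVlt => /orP[/eqP ->|ltin] Fx.
  exists (fun=> x); split => //; first exact: cst_continuous.
  by move=> t _; case: Fx.
have [U [V [L [LF [phi [psi [[_ Ux oV] [_ fLF] [cphi _ inj _] apx img]]]]]]] := Hloc i ltin x Fx.
case: fLF => _ _ _ _.
set k := (n - i).-1.
rewrite properEneq => -[neq sub].
have [l nl] : exists l, ~ Fz LF (k%:Z - 1) l.
  case: (pselect (exists l, ~ Fz LF (k%:Z - 1) l)) => // nex; exfalso.
  move/negP: neq; apply; apply/eqP; apply/seteqP; split => // y _.
  by apply: contrapT => ny; apply: nex; exists y.
have gB : forall t : R, (U `*` setT) (x, cpath l t) by move=> t; split.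
exists (fun t => phi (x, cpath l t)); split.
- have -> : (fun t => phi (x, cpath l t)) = phi \o (fun t => (x, cpath l t)) by [].
  apply: comp_within cphi => // t.
  exact: (cvg_pair (cvg_cst x) (@cpath_cont R L l t)).
- exact: apx (cpath_apex _ _).
- move=> t /andP[t0 _] Fb.
  have [e1 [e2 e3]] : (i%:Z + (k%:Z - 1) + 1 = n%:Z - 1)%R /\ (k%:Z - 1 <= n%:Z - i%:Z - 1)%R /\ (-1 <= k%:Z - 1)%R.
    by rewrite /k; lia.
  have := img _ e3 e2; rewrite e1 => /seteqP[_ /(_ (phi (x, cpath l t)))].
  case.
    by split => //; have [] := inj _ (gB t).
  move=> [u c] [Uu cc] e.
  have [_ e'] := inj _ (gB t).
  have [_ e''] := inj (u, c) (conj Uu I).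
  have ee : (u, c) = (x, cpath l t) by rewrite -e'' e e'.
  case: ee => _ ec; rewrite ec in cc.
  by apply: nl; exact: (cpath_coneon t0 cc).
Qed.

Section P2.
Variable R : realType.
Definition c1 (v : R) : R := Num.min (Num.max v 0) 1.
Arguments c1 : clear implicits.
Lemma c1_ge0 v : 0 <= c1 v.
Proof. by rewrite /c1 le_min le_max lexx orbT /= ler01. Qed.
Lemma c1_le1 v : c1 v <= 1.
Proof. by rewrite /c1 ge_min lexx orbT. Qed.
Lemma c1_0 : c1 0 = 0.
Proof. by rewrite /c1 maxxx; apply/min_idPl; rewrite ler01. Qed.
Lemma c1_1 : c1 1 = 1.
Proof. by rewrite /c1 (max_idPl ler01) minxx. Qed.
Lemma c1_cont : continuous c1.
Proof.
move=> t.
apply: (@continuous_min R R (fun t => Num.max t 0) (fun=> 1)).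
  apply: (@continuous_max R R id (fun=> 0)); [exact: cvg_id|exact: cvg_cst].
exact: cvg_cst.
Qed.

Lemma cover0 : @stdsimplex R 0 `<=` Defs.conv [:: (const_mx 1 : 'rV[R]_1)].
Proof.
move=> t [_]; rewrite big_ord1 => t1.
exists (fun _ => 1); split => //.
  by rewrite big_ord1.
rewrite big_ord1 scale1r /=; apply/rowP => j; rewrite !ord1 mxE.
by rewrite -t1; congr (t _ _); apply/val_inj.
Qed.

Lemma cover1 : @stdsimplex R 1 `<=` Defs.conv [:: (delta_mx 0 0 : 'rV[R]_2); delta_mx 0 1].
Proof.
move=> t [t0 ts].
exists (fun k => if k == 0%N then t 0 0 else t 0 1); split => /=.
- by move=> k; case: ifP.
- rewrite -ts !big_ord_recl !big_ord0 /= !addr0; congr (t 0 _ + t 0 _); exact/val_inj.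
- rewrite big_ord_recl big_ord1 /=.
  apply/rowP => j; rewrite !mxE /=.
  case: j => [[|[|//]]] Hj. all: rewrite ?mulr1 ?mulr0 ?addr0 ?add0r /=. all: by congr (t 0 _); apply/val_inj.
Qed.
End P2.
Arguments c1 {R}.

Lemma stratum_sing (R : realType) (X : topologicalType) (n : nat) (F : nat -> set X) :
  is_CS_set R n F -> forall i S, (i < n)%N -> stratum n F i S -> forall z, S z -> Fz F (n%:Z-1) z.
Proof.
move=> CS i S lt [_ [x' [_ ->]]] z /connected_component_sub [Fiz _].
case: CS => [[_ _ mono _ _] _ _].
case: n lt mono => // n' lt mono.
by rewrite Fz_succ; apply: (mono i n') => //; exact: leqW.
Qed.

Lemma part2 (R : realType) (X : topologicalType) (n : nat) (F : nat -> set X)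
  (p : set X -> \bar int) : is_CS_set R n F -> forall x : X,
  full n F p (@pt_simplex R X x) ->
  exists y, ~ Fz F (n%:Z - 1) y /\ gedge R n F p x y.
Proof.
move=> CS x Hx.
have [beta [cb b0 breg]] := part1 CS x.
have Sreg := stratum_sing CS.
pose sig := fun t : 'rV[R]_2 => beta (c1 (t 0 1)).
exists (beta 1); split; first by apply: breg; rewrite ltr01 lexx.
exists sig; split.
- split.
  + apply: continuous_subspaceT => t.
    have -> : sig = beta \o (c1 \o (fun t : 'rV[R]_2 => t 0 1)) by [].
    apply: continuous_comp; last exact: cb.
    apply: continuous_comp; last exact: c1_cont.
    exact: coord_continuous.
  + move=> m f hf i S lt st.
    case: (pselect (exists t, @stdsimplex R m t /\ S (sig (facemap f t)))) => [[t [_ tS]]|none]; last first.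
      by exists [::]; split => // y [Ay1 Ay2]; exfalso; apply: none; exists y; split.
    have xS : S x.
      move: tS; rewrite /sig; set v := c1 _.
      have [->|vn0] := eqVneq v 0; first by rewrite b0.
      move=> Sv; exfalso; apply: (breg v); last exact: (Sreg i S lt st _ Sv).
      by rewrite lt0r vn0 c1_ge0 /= c1_le1.
    have b0' : (0 <= ((0%:Z - (n%:Z - i%:Z))%:E + p S))%E.
      have hf0 : forall a b : 'I_1, (a < b)%N -> ((fun k => k) a < (fun k => k) b)%N.
        by move=> a b; rewrite !ord1.
      have := Hx.2 0%N (fun k => k) hf0 i S lt st.
      case=> s [sz cov].
      have [|t' t's ct'] := cov (const_mx 1).
        split; [split|by []]; last by rewrite big_ord1 mxE.
        by move=> k; rewrite mxE ler01.
      have := sz t' t's.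
      case: t' {t's} ct' => [|a t''] ct'.
        case: ct' => lam [_ + _]; rewrite big_ord0 => /esym/eqP; rewrite oner_eq0.
        by [].
      move=> h; apply: le_trans h; rewrite lee_fin /=; lia.
    case: m f hf t tS => [|[|m]] f hf _ _.
    * exists [:: [:: const_mx 1]]; split.
        by move=> u; rewrite inE => /eqP -> /=; rewrite subrr.
      by move=> y [y1 _]; exists [:: const_mx 1]; [rewrite inE | exact: cover0].
    * exists [:: [:: delta_mx 0 0; delta_mx 0 1]]; split.
        move=> u; rewrite inE => /eqP -> /=.
        move: b0'; case: (p S) => [r| |] //=.
        by rewrite !lee_fin; lia.
      by move=> y [y1 _]; exists [:: delta_mx 0 0; delta_mx 0 1]; [rewrite inE | exact: cover1].
    * exfalso.
      have h1 := hf (inord 0) (inord 1); have h2 := hf (inord 1) (inord 2).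
      rewrite !inordK // in h1 h2.
      have := ltn_ord (f (inord 2)); have := h1 isT; have := h2 isT; lia.
- by rewrite /sig mxE /= c1_0 b0.
- by rewrite /sig mxE /= c1_1.
Qed.

Unset Implicit Arguments.

Theorem mainTheorem16 (R : realType) (X : topologicalType) (n : nat)
  (F : nat -> set X) (p : set X -> \bar int) :
  is_CS_set R n F -> perversity n F p ->
  (forall x : X, exists beta : R -> X,
     [/\ {within [set t : R | 0 <= t <= 1], continuous beta},
         beta 0 = x &
         forall t : R, 0 < t <= 1 -> ~ Fz F (n%:Z - 1) (beta t)]) /\
  (forall C, pi0_gajer R n F p C ->
     exists y : X, ~ Fz F (n%:Z - 1) y /\ pi0_map R n F p y = C).
Proof.
move=> CS _; split.
- move=> x; have [beta [cb b0 br]] := part1 CS x.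
  by exists beta; split => //; exact: continuous_subspaceT.
- move=> C [x [fx ->]].
  have [y [ry ge]] := part2 CS fx.
  exists y; split => //.
  rewrite /pi0_map /gclass; apply/seteqP; split => z /= h.
    exact: (rst_trans _ _ x y z (rst_step _ _ _ _ ge) h).
  exact: (rst_trans _ _ y x z (rst_sym _ _ _ _ (rst_step _ _ _ _ ge)) h).
Qed.
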